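(* Let $T$ be a singular weighted tree. Then $T^{\#}$ is a tree if and only if $T$ is a star.
   Context: A weighted tree has a nonzero real weight on each edge; it is singular if its adjacency matrix $A$ ($(i,j)$ entry equal to the weight of edge $v_iv_j$, or $0$ if no edge) is singular. $A^{\#}$ is the group inverse of $A$ (unique $X$ with $AXA=A$, $XAX=X$, $AX=XA$); $T^{\#}$ is the weighted graph on the vertex set of $T$ with $v_iv_j$ an edge iff $(A^{\#})_{ij}\neq 0$, weighted by that entry. *)

(* Defs.v *)
From HB Require Import structures.
From mathcomp Require Import all_boot all_order all_algebra.
Set Implicit Arguments. Unset Strict Implicit. Unset Printing Implicit Defensive.
Import Order.TTheory GRing.Theory Num.Theory.
Local Open Scope ring_scope.

Definition mx_graph (R : nzRingType) (n : nat) (M : 'M[R]_n) : rel 'I_n :=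
  fun i j => (i != j) && (M i j != 0).

Definition connected_graph (n : nat) (e : rel 'I_n) : Prop :=
  forall i j : 'I_n, connect e i j.

Definition acyclic_graph (n : nat) (e : rel 'I_n) : Prop :=
  forall c : seq 'I_n, uniq c -> (3 <= size c)%N -> ~~ cycle e c.

Definition is_tree (n : nat) (e : rel 'I_n) : Prop :=
  (0 < n)%N /\ connected_graph e /\ acyclic_graph e.

Definition is_star (n : nat) (e : rel 'I_n) : Prop :=
  exists c : 'I_n, forall i j : 'I_n, e i j -> (i == c) || (j == c).

Definition is_group_inverse (R : nzRingType) (n : nat) (A X : 'M[R]_n) : Prop :=
  [/\ A *m X *m A = A, X *m A *m X = X & A *m X = X *m A].

(* Main.v *)
Require Import Defs.
From HB Require Import structures.
From mathcomp Require Import all_boot all_order all_algebra.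
From Stdlib Require Import FunctionalExtensionality.
Set Implicit Arguments. Unset Strict Implicit. Unset Printing Implicit Defensive.
Import Order.TTheory GRing.Theory Num.Theory.
Section G.
Variables (n : nat) (e : rel 'I_n).
Hypothesis acy : acyclic_graph e.
Hypothesis esym : forall x y, e x y = e y x.
Hypothesis eirr : forall x, e x x = false.

Lemma chord a x r b : path e a (x :: r) -> uniq (a :: x :: r) -> b \in r -> e b a -> False.
Proof.
move=> pth un rb eba; move: pth un; case/splitPr: rb => r1 r2 pth un.
have un' : uniq ((a :: x :: r1) ++ b :: r2) := un.
have pth' : path e a ((x :: r1) ++ b :: r2) := pth.
move: un'; rewrite cat_uniq => /and3P [u1 hb _].
have bn : b \notin a :: x :: r1.
  by apply: contra hb => bin; apply/hasP; exists b => //; rewrite inE eqxx.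
move: pth'; rewrite cat_path => /andP [p1 p2].
have Hu : uniq (b :: a :: x :: r1) by rewrite cons_uniq bn u1.
move: (acy Hu isT) => /negP; apply.
move: p2 => /= /andP [elb _].
by rewrite /cycle /= eba /= rcons_path; move: p1 elb => /= /andP [-> ->] /= ->.
Qed.

Variable p : pred 'I_n.
Hypothesis hsum : forall x y, p x -> e x y -> ~~ p y -> exists u, [/\ u != x, p u & e u y].

Lemma ext a r y : p a -> path e a r -> uniq (a :: r) -> e a y -> y \notin (a :: r) ->
  exists a' r', [/\ p a', path e a' r', uniq (a' :: r') & (size r).+1 <= size r'].
Proof.
move=> pa pth un eay yn.
have [py|npy] := boolP (p y).
  exists y, (a :: r); split=> //; first by rewrite /= esym eay.
  by rewrite cons_uniq yn.
have [u [ua pu euy]] := hsum pa eay npy.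
exists u, (y :: a :: r); split=> //.
- by rewrite /= euy esym eay.
- rewrite cons_uniq cons_uniq yn un !andbT inE negb_or.
  have -> : u != y by apply: contraTneq euy => ->; rewrite eirr.
  rewrite inE negb_or ua /=; apply/negP => ur.
  apply: (chord (a := y) (x := a) (r := r) (b := u)) => //=;
    by rewrite ?(esym y a) ?eay ?pth ?yn.
Qed.

Hypothesis nbr : forall x, exists y, e x y.

Lemma leaf_in_supp a0 : p a0 -> exists l m, p l /\ (forall j, e l j = (j == m)).
Proof.
move=> pa0.
have main : forall k, (exists l m, p l /\ (forall j, e l j = (j == m))) \/
   exists a r, [/\ p a, path e a r, uniq (a :: r) & k <= size r].
  elim=> [|k IH]; first by right; exists a0, [::].
  case: IH => [L|[a [r [pa pth un le]]]]; first by left.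
  case: r pth un le => [|x r] pth un le.
    have [y eay] := nbr a.
    have [a' [r' [h1 h2 h3 h4]]] : exists a' r', [/\ p a', path e a' r', uniq (a' :: r') & 1 <= size r'].
      apply: (ext pa pth un eay); rewrite inE; apply: contraTneq eay => ->; by rewrite eirr.
    by right; exists a', r'; split=> //; apply: leq_trans h4; rewrite ltnS.
  have [/existsP [y /andP [eay yx]]|nex] := boolP [exists y, e a y && (y != x)].
    have yn : y \notin a :: x :: r.
      rewrite !inE !negb_or yx /=; apply/andP; split.
        by apply: contraTneq eay => ->; rewrite eirr.
      apply/negP => yr; apply: (chord (a := a) (x := x) (r := r) (b := y)) => //.
      by rewrite esym.
    have [a' [r' [h1 h2 h3 h4]]] := ext pa pth un eay yn.
    by right; exists a', r'; split=> //; apply: leq_trans h4; rewrite ltnS.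
  left; exists a, x; split=> // j; apply/idP/eqP => [eaj|->]; last by case/andP: pth.
  by apply/eqP; apply: contraNT nex => jx; apply/existsP; exists j; rewrite eaj.
have [[l [m H]]|[a [r [_ _ un le]]]] := main n.+1; first by exists l, m.
move/card_uniqP: un; have := max_card (mem (a :: r)); rewrite card_ord => h1 h2.
move: h1; rewrite h2 /= => h1; move: (leq_trans le (ltnW h1)); by rewrite ltnn.
Qed.
End G.

Local Open Scope ring_scope.

Lemma ginv_unique (R : comNzRingType) (n : nat) (A X Y : 'M[R]_n) :
  is_group_inverse A X -> is_group_inverse A Y -> X = Y.
Proof.
case=> h1 h2 h3 [k1 k2 k3].
have e1 : A *m X = Y *m A.
  transitivity (A *m Y *m A *m X); first by rewrite k1.
  rewrite k3 -!mulmxA h3 [A *m (X *m A)]mulmxA h1 //.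
have e2 : A *m X = A *m Y by rewrite e1 k3.
transitivity (X *m A *m X); first by rewrite h2.
rewrite -mulmxA e2 mulmxA -h3 e1 k2 //.
Qed.

Lemma star_ginv (R : realFieldType) n (M Y : 'M[R]_n) (c : 'I_n) :
  M^T = M -> (forall i, M i i = 0) ->
  (forall i j, M i j != 0 -> (i == c) || (j == c)) ->
  is_group_inverse M Y -> forall i j, (Y i j != 0) = (M i j != 0).
Proof.
move=> HT Hd Hs HY.
have sym : forall i j, M i j = M j i by move=> i j; rewrite -{1}HT mxE.
pose u := col c M. pose e := delta_mx c (0:'I_1) : 'cV[R]_n.
have Mdec : M = u *m e^T + e *m u^T.
  apply/matrixP => i j; rewrite !mxE !big_ord1 !mxE /=.
  case: (eqVneq i c) => [->|ic]; case: (eqVneq j c) => [->|jc] /=;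
    rewrite ?Hd ?mulr0 ?mulr1 ?mul1r ?mul0r ?addr0 ?add0r ?(sym j c) //.
  by case: (eqVneq (M i j) 0) => // /Hs; rewrite (negbTE ic) (negbTE jc).
have outer : forall x y z w : 'cV[R]_n,
    (x *m y^T) *m (z *m w^T) = (y^T *m z) 0 0 *: (x *m w^T).
  move=> x y z w; rewrite mulmxA -(mulmxA x) {1}[y^T *m z]mx11_scalar.
  by rewrite mul_mx_scalar scalemxAl.
have eu : (e^T *m u) 0 0 = 0.
  rewrite !mxE (bigD1 c) //= big1 ?mxE ?eqxx ?Hd ?mulr0 ?add0r //.
  by move=> k kc; rewrite !mxE (negbTE kc) mul0r.
have ue : (u^T *m e) 0 0 = 0.
  rewrite !mxE (bigD1 c) //= big1 ?mxE ?eqxx ?Hd ?mul0r ?add0r //.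
  by move=> k kc; rewrite !mxE (negbTE kc) mulr0.
have ee : (e^T *m e) 0 0 = 1.
  rewrite !mxE (bigD1 c) //= big1 ?mxE ?eqxx ?mulr1 ?addr0 //.
  by move=> k kc; rewrite !mxE (negbTE kc) mulr0.
pose s := (u^T *m u) 0 0.
have M2 : M *m M = u *m u^T + s *: (e *m e^T).
  rewrite Mdec mulmxDl !mulmxDr !outer eu ue ee !scale0r add0r addr0 scale1r.
  by [].
have M3 : M *m M *m M = s *: M.
  rewrite M2 {1}Mdec mulmxDl !mulmxDr -!scalemxAl !outer eu ue ee.
  by rewrite !scale0r !scaler0 addr0 add0r scale1r -scalerDr -Mdec.
have sq : s = \sum_k M k c ^+ 2.
  by rewrite /s !mxE; apply: eq_bigr => k _; rewrite !mxE expr2.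
have [s0|sn0] := eqVneq s 0.
  have Mc : forall k, M k c = 0.
    move=> k; apply/eqP; rewrite -sqrf_eq0; apply/eqP.
    have := @psumr_eq0P _ _ predT (fun k => M k c ^+ 2) (fun i _ => sqr_ge0 _); rewrite -sq; by move/(_ s0 k isT).
  have M0 : M = 0.
    apply/matrixP => i j; rewrite mxE; have [//|nz] := eqVneq (M i j) 0.
    by have h := Hs _ _ nz; move: nz; case/orP: h => /eqP ->; rewrite ?Mc // sym Mc.
  case: HY => _ h2 _; move: h2; rewrite M0 mulmx0 mul0mx => <- i j.
  by rewrite !mxE eqxx.
have HY' : is_group_inverse M (s^-1 *: M).
  split.
  - by rewrite -scalemxAr -scalemxAl M3 scalerA mulVf // scale1r.
  - by rewrite -!scalemxAl -scalemxAr M3 !scalerA mulrAC mulVf // mul1r.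
  - by rewrite -scalemxAl -scalemxAr.
rewrite (ginv_unique HY HY') => i j; rewrite mxE mulf_eq0 invr_eq0 (negbTE sn0) //.
Qed.



Theorem lemma2p11 (R : realFieldType) (n : nat) (A X : 'M[R]_n) :
  A^T = A ->
  (forall i : 'I_n, A i i = 0) ->
  is_tree (mx_graph A) ->
  \det A = 0 ->
  is_group_inverse A X ->
  (is_tree (mx_graph X) <-> is_star (mx_graph A)).
Proof.
move=> HT Hd [n0 [Acon Aacy]] Hdet HX.
have symA : forall i j, A i j = A j i by move=> i j; rewrite -{1}HT mxE.
have HXt : is_group_inverse A X^T.
  case: HX => h1 h2 h3; split.
  - by move/(congr1 trmx): h1; rewrite !trmx_mul HT mulmxA.
  - by move/(congr1 trmx): h2; rewrite !trmx_mul HT mulmxA.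
  - by move/(congr1 trmx): h3; rewrite !trmx_mul HT.
have Xs : X^T = X := ginv_unique HXt HX.
have symX : forall i j, X i j = X j i by move=> i j; rewrite -{1}Xs mxE.
split; last first.
  case=> c Hc.
  have Hs : forall i j, A i j != 0 -> (i == c) || (j == c).
    move=> i j nz; case: (eqVneq i j) => [eij|nij].
      by move: nz; rewrite eij Hd eqxx.
    by apply: Hc; rewrite /mx_graph nij nz.
  have pat := star_ginv HT Hd Hs HX.
  have -> : mx_graph X = mx_graph A.
    apply: functional_extensionality => i; apply: functional_extensionality => j.
    by rewrite /mx_graph pat.
  by split.
case=> _ [Xcon Xacy].
have [/existsP [i0 /existsP [j0 ij0]] | noneq] := boolP [exists i : 'I_n, exists j : 'I_n, i != j]; last first.
  exists (Ordinal n0) => i j /andP [ij _]; exfalso.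
  by move: noneq => /existsPn /(_ i) /existsPn /(_ j); rewrite ij.
have /det0P [v vn0 vA] : \det A == 0 by rewrite Hdet.
have [a0 pa0] : exists a0, v 0 a0 != 0.
  apply/existsP; apply: contraNT vn0 => /existsPn H; apply/eqP/matrixP => i j.
  by rewrite ord1 mxE; apply/eqP; move: (H j); rewrite negbK.
have eAsym : forall x y, mx_graph A x y = mx_graph A y x.
  by move=> x y; rewrite /mx_graph eq_sym symA.
have eAirr : forall x, mx_graph A x x = false by move=> x; rewrite /mx_graph eqxx.
have nbr : forall x, exists y, mx_graph A x y.
  move=> x; pose t := if x == i0 then j0 else i0.
  have tx : t != x.
    rewrite /t; case: (eqVneq x i0) => [->|]; first by rewrite eq_sym.
    by rewrite eq_sym.
  have /connectP [q pth lst] := Acon x t.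
  case: q pth lst => [|y q] /=; first by move=> _ tx'; move: tx; rewrite tx' eqxx.
  by case/andP => exy _ _; exists y.
have hsum : forall x y, v 0 x != 0 -> mx_graph A x y -> ~~ (v 0 y != 0) ->
    exists u, [/\ u != x, v 0 u != 0 & mx_graph A u y].
  move=> x y px exy npy.
  have [/existsP [u /and3P [h1 h2 h3]]|none] :=
    boolP [exists u, [&& u != x, v 0 u != 0 & mx_graph A u y]]; first by exists u.
  exfalso; have : (v *m A) 0 y = 0 by rewrite vA mxE.
  rewrite mxE (bigD1 x) //= big1 ?addr0.
    move/eqP; rewrite mulf_eq0 (negbTE px) /=.
    by case/andP: exy => _ /negbTE ->.
  move=> k kx; case: (eqVneq (v 0 k) 0) => [->|vk]; first by rewrite mul0r.
  case: (eqVneq k y) => [ky|nky]; first by move: npy; rewrite -ky vk.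
  move/existsPn: none => /(_ k); rewrite kx vk /mx_graph nky /=.
  by move/negPn/eqP ->; rewrite mulr0.
have [l [m [pl Hl]]] := @leaf_in_supp n (mx_graph A) Aacy eAsym eAirr (fun i => v 0 i != 0) hsum nbr a0 pa0.
have lm : l != m by move: (Hl m); rewrite eqxx => /andP [].
have Alm : A l m != 0 by move: (Hl m); rewrite eqxx => /andP [].
have Arow : forall j, j != m -> A l j = 0.
  move=> j jm; case: (eqVneq j l) => [->|jl]; first by rewrite Hd.
  by move: (Hl j); rewrite (negbTE jm) /mx_graph eq_sym jl /= => /negbFE/eqP.
case: HX => h1 h2 h3.
pose K := 1%:M - A *m X.
have AK : A *m K = 0.
  by rewrite /K mulmxBr mulmx1 mulmxA -[A *m A *m X]mulmxA h3 mulmxA h1 subrr.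
have XK : X *m K = 0 by rewrite /K mulmxBr mulmx1 mulmxA h2 subrr.
have vK : v *m K = v by rewrite /K mulmxBr mulmx1 mulmxA vA mul0mx subr0.
have Ksym : K^T = K by rewrite /K linearB /= trmx1 trmx_mul HT Xs h3.
have KK : K *m K = K.
  by rewrite {1}/K mulmxBl mul1mx -mulmxA XK mulmx0 subr0.
pose z j := K j l.
have zA : forall i, \sum_j A i j * z j = 0.
  by move=> i; move: (congr1 (fun M : 'M[R]_n => M i l) AK); rewrite !mxE.
have zX : forall i, \sum_j X i j * z j = 0.
  by move=> i; move: (congr1 (fun M : 'M[R]_n => M i l) XK); rewrite !mxE.
have symK : forall i j, K i j = K j i by move=> i j; rewrite -{1}Ksym mxE.
have zne : exists j, z j != 0.
  apply/existsP; apply: contraTT pl => /existsPn H.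
  rewrite -vK mxE big1 ?eqxx // => j _.
  by move: (H j); rewrite negbK /z => /eqP ->; rewrite mulr0.
have zm : z m = 0.
  move: (zA l); rewrite (bigD1 m) //= big1 ?addr0.
    by move/eqP; rewrite mulf_eq0 (negbTE Alm) /= => /eqP.
  by move=> j jm; rewrite Arow // mul0r.
have zl_sq : z l = \sum_j z j ^+ 2.
  rewrite /z -{1}KK mxE; apply: eq_bigr => j _; by rewrite symK expr2.
have zl0 : z l != 0.
  case: zne => j zj; apply/negP => /eqP zl.
  have := @psumr_eq0P _ _ predT (fun k => z k ^+ 2) (fun i _ => sqr_ge0 _).
  by rewrite -zl_sq => /(_ zl j isT) /eqP; rewrite sqrf_eq0 (negbTE zj).
have zl1 : z l != 1.
  apply/negP => /eqP zl.
  have : \sum_(j | j != l) z j ^+ 2 = 0.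
    by move: zl_sq; rewrite (bigD1 l) //= zl expr1n => /eqP; rewrite addrC -subr_eq subrr eq_sym => /eqP.
  move/psumr_eq0P => /(_ (fun i _ => sqr_ge0 _)) zo.
  move: (zA m); rewrite (bigD1 l) //= big1 ?addr0.
    by rewrite zl mulr1 symA => /eqP; rewrite (negbTE Alm).
  move=> j jl; move: (zo j jl) => /eqP; rewrite sqrf_eq0 => /eqP ->; by rewrite mulr0.
have Aml : A m l != 0 by rewrite symA.
have Xcol : forall j, X j m * A m l = (j == l)%:R - z j.
  move=> j; have : (X *m A) j l = X j m * A m l.
    rewrite mxE (bigD1 m) //= big1 ?addr0 // => k km; by rewrite symA Arow // mulr0.
  move=> <-; rewrite -h3 /z /K !mxE opprB addrC subrK //.
have XmNZ : forall j, (X m j != 0) = (z j != 0).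
  move=> j; rewrite symX; case: (eqVneq j l) => [->|jl].
    rewrite zl0; apply/negP => /eqP X0; move: (Xcol l); rewrite X0 mul0r eqxx.
    by move/eqP; rewrite eq_sym subr_eq0 eq_sym (negbTE zl1).
  move: (Xcol j); rewrite (negbTE jl) sub0r => E.
  have : (X j m * A m l != 0) = (X j m != 0) by rewrite mulf_eq0 (negbTE Aml) orbF.
  by move=> <-; rewrite E oppr_eq0.
have Xmm : X m m = 0 by move: (XmNZ m); rewrite zm eqxx /= => /negbFE/eqP.
have leafX : forall s y, z s != 0 -> y != s -> y != m -> X s y = 0.
  move=> s y zs ys ym; apply/eqP; apply: contraT => Xsy.
  have sm : s != m by apply: contraNneq zs => ->; rewrite zm.
  have esm : mx_graph X s m by rewrite /mx_graph sm symX XmNZ.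
  have eys : mx_graph X y s by rewrite /mx_graph ys symX.
  case: (eqVneq (z y) 0) => zy.
    move: (zX y); rewrite (bigD1 s) //= big1 ?addr0.
      by move/eqP; rewrite mulf_eq0 symX (negbTE Xsy) (negbTE zs).
    move=> k ks; case: (eqVneq (z k) 0) => [->|zk]; first by rewrite mulr0.
    case: (eqVneq (X y k) 0) => [->|Xyk]; first by rewrite mul0r.
    exfalso.
    have yk : y != k by apply: contraNneq zk => <-; rewrite zy.
    have sk : s != k by rewrite eq_sym.
    have mk : m != k by apply: contraNneq zk => <-; rewrite zm.
    have emk : mx_graph X m k by rewrite /mx_graph mk XmNZ.
    have eky : mx_graph X k y by rewrite /mx_graph eq_sym yk symX.
    have U : uniq [:: y; s; m; k] by rewrite /= !inE !negb_or ys ym yk sm sk mk.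
    by move: (Xacy _ U isT); rewrite /cycle /= eys esm emk eky.
  have my : m != y by apply: contraNneq zy => <-; rewrite zm.
  have sy : s != y by rewrite eq_sym.
  have emy : mx_graph X m y by rewrite /mx_graph my XmNZ.
  have U : uniq [:: s; m; y] by rewrite /= !inE !negb_or sm sy my.
  by move: (Xacy _ U isT); rewrite /cycle /= esm emy eys.
have clos : forall w, (w == m) || (z w != 0).
  have step : forall x y, mx_graph X x y -> (x == m) || (z x != 0) -> (y == m) || (z y != 0).
    move=> x y /andP [xy Xxy] /orP [/eqP xm|zx].
      by move: Xxy; rewrite xm XmNZ => ->; rewrite orbT.
    case: (eqVneq y m) => // ym /=; exfalso; move: Xxy.
    by rewrite leafX ?eqxx // eq_sym.
  have cl : closed (mx_graph X) [pred w | (w == m) || (z w != 0)].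
    move=> x y exy; rewrite !inE; apply/idP/idP; first exact: step.
    by apply: step; move: exy; rewrite /mx_graph eq_sym symX.
  by move=> w; move: (closed_connect cl (Xcon m w)); rewrite !inE eqxx /= => <-.
have Xdiag : forall s, X s s = 0.
  move=> s; case: (eqVneq s m) => [->|sm]; first exact: Xmm.
  have zs : z s != 0 by move: (clos s); rewrite (negbTE sm).
  move: (zX s); rewrite (bigD1 s) //= big1 ?addr0.
    by move/eqP; rewrite mulf_eq0 (negbTE zs) orbF => /eqP.
  move=> k ks; case: (eqVneq k m) => [->|km]; first by rewrite zm mulr0.
  by rewrite leafX ?mul0r.
have Xstar : forall i j, X i j != 0 -> (i == m) || (j == m).
  move=> i j Xij; case: (eqVneq i m) => //= im; case: (eqVneq j m) => //= jm.
  have zi : z i != 0 by move: (clos i); rewrite (negbTE im).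
  case: (eqVneq j i) => [ji|ji]; first by move: Xij; rewrite ji Xdiag eqxx.
  by move: Xij; rewrite leafX ?eqxx.
have HXA : is_group_inverse X A by split => //; rewrite h3.
have pat := star_ginv Xs Xdiag Xstar HXA.
by exists m => i j /andP [_ Aij]; apply: Xstar; rewrite -pat.
Qed.
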